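(* In the derived category $\mathcal D(\underline{\mathbb Z/2})$ one has: (a) $A_k^{op}\simeq\Sigma^{-k}A_k$ for $k\ge 0$; (b) $H(n)^{op}\simeq H(-(n+2))$ for all $n\in\mathbb Z$; (c) $B_r^{op}\simeq\Sigma^{r+4}B_r$ for $r\geq0$.
   Context: A $\underline{\mathbb Z/2}$-module is a pair of $\mathbb F_2$-vector spaces $M_\Theta,M_\bullet$ with maps $t\colon M_\Theta\to M_\Theta$, $p^*\colon M_\bullet\to M_\Theta$, $p_*\colon M_\Theta\to M_\bullet$ with $tp^*=p^*$, $p_*t=p_*$, $t^2=1$, $p^*p_*=1+t$, $p_*p^*=0$. $H$: both spaces $\mathbb F_2$, $t=p^*=\mathrm{id}$, $p_*=0$. $F$: $F_\Theta=\mathbb F_2^2$, $t$ the swap, $F_\bullet=\mathbb F_2$, $p_*(x,y)=x+y$, $p^*(z)=(z,z)$. $p\colon F\to H$, $p\colon H\to F$ the unique nonzero maps, $u=1+t$. Homological grading, $(\Sigma C)_i=C_{i-1}$. $A_k$: $F$ in degrees $k,\dots,0$, differentials $u$. $H(0)=H$ in degree $0$; for $n>0$, $H(-n)$: $H$ in degree $n$, $F$ in degrees $n-1,\dots,0$, differentials $p,u,\dots,u$; $H(n)$: $F$ in degrees $0,\dots,-(n-1)$, $H$ in degree $-n$, differentials $u,\dots,u,p$. $B_r$: $H$ in degree $0$, $F$ in degrees $-1,\dots,-(r+1)$, $H$ in degree $-(r+2)$, differentials $p,u,\dots,u,p$. For a module $M$, $M^{op}$ has $(M^{op})_\Theta=(M_\Theta)^\vee$,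 $(M^{op})_\bullet=(M_\bullet)^\vee$ (linear duals), $t_{M^{op}}=t_M^\vee$, $p^*_{M^{op}}=(p_*^M)^\vee$, $p_*^{M^{op}}=(p^*_M)^\vee$. For a complex $C$, $C^{op}$ is the complex with $(C^{op})_i=(C_{-i})^{op}$ and dual differentials; this preserves quasi-isomorphisms and so is defined on $\mathcal D(\underline{\mathbb Z/2})$. *)

(* Defs.v *)
From mathcomp Require Import all_boot all_algebra.
From mathcomp Require Import zify.
From Stdlib Require Import Relations.
Set Implicit Arguments. Unset Strict Implicit. Unset Printing Implicit Defensive.
Import GRing.Theory Num.Theory.
Local Open Scope ring_scope.

Ltac mxdec := apply/matrixP=> i j; rewrite !mxE ?big_ord_recl ?big_ord0 ?mxE /=;
  repeat match goal with | i : 'I_ _ |- _ => let k := fresh in case: i => -[|[|[|]]] k //= end;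
  by apply/eqP.

(* M_Theta = 'rV_(dT), M_bullet = 'rV_(dB);  t : M_Theta -> M_Theta,
   p^* = res : M_bullet -> M_Theta,  p_* = ind : M_Theta -> M_bullet.
   A linear map f is encoded by its matrix A with f v = v *m A, so the
   composite "f then g" has matrix A *m B. *)
Record Z2Mod := MkZ2Mod {
  dT : nat; dB : nat;
  tM : 'M['F_2]_(dT, dT);
  resM : 'M['F_2]_(dB, dT);
  indM : 'M['F_2]_(dT, dB);
  ax_tres : resM *m tM = resM;
  ax_indt : tM *m indM = indM;
  ax_tt   : tM *m tM = 1%:M;
  ax_resind : indM *m resM = 1%:M + tM;
  ax_indres : resM *m indM = 0
}.

Definition is_hom (M N : Z2Mod) (fT : 'M['F_2]_(dT M, dT N)) (fB : 'M['F_2]_(dB M, dB N)) :=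
  [/\ tM M *m fT = fT *m tM N, resM M *m fT = fB *m resM N & indM M *m fB = fT *m indM N].

(* M^op : linear duals; t^vee, p^* := dual of p_*, p_* := dual of p^* .
   In dual bases the dual of v |-> v *m A is the transpose. *)
Definition dualM (M : Z2Mod) : Z2Mod.
Proof.
refine (@MkZ2Mod (dT M) (dB M) (tM M)^T (indM M)^T (resM M)^T _ _ _ _ _).
- by rewrite -trmx_mul ax_indt.
- by rewrite -trmx_mul ax_tres.
- by rewrite -trmx_mul ax_tt trmx1.
- by rewrite -trmx_mul ax_resind linearD /= trmx1.
- by rewrite -trmx_mul ax_indres trmx0.
Defined.

Lemma dual_hom (M N : Z2Mod) (fT : 'M['F_2]_(dT M, dT N)) (fB : 'M['F_2]_(dB M, dB N)) :
  @is_hom M N fT fB ->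
  @is_hom (dualM N) (dualM M) fT^T fB^T.
Proof.
rewrite /is_hom /= => -[h1 h2 h3]; split; rewrite -!trmx_mul; congr trmx; by [rewrite h1|rewrite h3|rewrite h2].
Qed.

Definition sw : 'M['F_2]_2 := \matrix_(i, j) (if i == j then 0 else 1).
Definition ones (m n : nat) : 'M['F_2]_(m, n) := const_mx 1.

Definition Hmod : Z2Mod.
Proof. refine (@MkZ2Mod 1 1 1%:M 1%:M 0 _ _ _ _ _); mxdec. Defined.
Definition Fmod : Z2Mod.
Proof. refine (@MkZ2Mod 2 1 sw (ones 1 2) (ones 2 1) _ _ _ _ _); mxdec. Defined.
Definition Zmod : Z2Mod.
Proof. refine (@MkZ2Mod 0 0 0 0 0 _ _ _ _ _); mxdec. Defined.

Inductive kind := KZ | KH | KF.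
Definition modK (a : kind) : Z2Mod :=
  match a with KZ => Zmod | KH => Hmod | KF => Fmod end.

(* the canonical maps: p : H -> F, p : F -> H (the unique nonzero maps),
   u = 1 + t : F -> F (its bullet component is forced to be 0), else 0 *)
Definition canonT (a b : kind) : 'M['F_2]_(dT (modK a), dT (modK b)) :=
  match a, b with
  | KH, KF => ones 1 2
  | KF, KH => ones 2 1
  | KF, KF => 1%:M + sw
  | _, _ => 0
  end.
Definition canonB (a b : kind) : 'M['F_2]_(dB (modK a), dB (modK b)) :=
  match a, b with
  | KH, KF => 1%:M
  | _, _ => 0
  end.

Lemma canon_hom a b : is_hom (canonT a b) (canonB a b).
Proof. by case: a; case: b; split; mxdec. Qed.

Definition bad (a b c : kind) := match a, b, c with KF, KH, KF => true | _, _, _ => false end.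

Lemma canon_sq a b c : bad a b c = false ->
  canonT a b *m canonT b c = 0 /\ canonB a b *m canonB b c = 0.
Proof. by case: a; case: b; case: c => //= _; split; mxdec. Qed.

Record cplx := MkCplx {
  ob : int -> Z2Mod;
  dTh : forall i j : int, 'M['F_2]_(dT (ob i), dT (ob j));
  dBu : forall i j : int, 'M['F_2]_(dB (ob i), dB (ob j));
  d_hom : forall i j, is_hom (dTh i j) (dBu i j);
  d_deg : forall i j, j + 1 != i -> dTh i j = 0 /\ dBu i j = 0;
  d_sqT : forall i j k, dTh i j *m dTh j k = 0;
  d_sqB : forall i j k, dBu i j *m dBu j k = 0
}.

(* shift: (Sigma^k C)_i = C_{i-k}  (signs are irrelevant in characteristic 2) *)
Definition shiftC (k : int) (C : cplx) : cplx.
Proof.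
refine (@MkCplx (fun i => ob C (i - k)) (fun i j => dTh C (i - k) (j - k))
                (fun i j => dBu C (i - k) (j - k)) (fun i j => @d_hom C _ _) _ _ _).
- move=> i j h; apply: d_deg; apply: contra h => /eqP e; apply/eqP.
  lia.
- by move=> i j l; apply: d_sqT.
- by move=> i j l; apply: d_sqB.
Defined.

Definition opC (C : cplx) : cplx.
Proof.
refine (@MkCplx (fun i => dualM (ob C (- i))) (fun i j => (dTh C (- j) (- i))^T)
                (fun i j => (dBu C (- j) (- i))^T) (fun i j => dual_hom (@d_hom C _ _)) _ _ _).
- move=> i j h; have [] := @d_deg C (- j) (- i).
    apply: contra h => /eqP e; apply/eqP.
    lia.
  by move=> -> ->; rewrite !trmx0.
- by move=> i j l; rewrite -trmx_mul d_sqT trmx0.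
- by move=> i j l; rewrite -trmx_mul d_sqB trmx0.
Defined.

Definition kdT (kap : int -> kind) (i j : int) : 'M['F_2]_(dT (modK (kap i)), dT (modK (kap j))) :=
  if j + 1 == i then canonT (kap i) (kap j) else 0.
Definition kdB (kap : int -> kind) (i j : int) : 'M['F_2]_(dB (modK (kap i)), dB (modK (kap j))) :=
  if j + 1 == i then canonB (kap i) (kap j) else 0.

Definition kcplx (kap : int -> kind)
  (hk : forall k : int, bad (kap (k + 1 + 1)) (kap (k + 1)) (kap k) = false) : cplx.
Proof.
refine (@MkCplx (fun i => modK (kap i)) (kdT kap) (kdB kap) _ _ _ _).
- move=> i j; rewrite /kdT /kdB; case: ifP => _; first exact: canon_hom.
  by split; rewrite ?mulmx0 ?mul0mx.
- by move=> i j /negbTE h; rewrite /kdT /kdB h.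
- move=> i j l; rewrite /kdT; case: eqP => [<-|]; last by rewrite mul0mx.
  case: eqP => [<-|]; last by rewrite mulmx0.
  by have [] := canon_sq (hk l).
- move=> i j l; rewrite /kdB; case: eqP => [<-|]; last by rewrite mul0mx.
  case: eqP => [<-|]; last by rewrite mulmx0.
  by have [] := canon_sq (hk l).
Defined.

Definition kapA (k : nat) (i : int) : kind :=
  if (0 <= i) && (i <= k%:Z) then KF else KZ.
(* H(m), m : int.  m = 0: H in degree 0.  m = -n < 0: H in degree n, F in
   degrees n-1..0.  m = n > 0: F in degrees 0..-(n-1), H in degree -n. *)
Definition kapH (m : int) (i : int) : kind :=
  if i == - m then KH
  else if ((0 <= i) && (i < - m)) || ((- m < i) && (i <= 0)) then KF else KZ.
Definition kapB (r : nat) (i : int) : kind :=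
  if (i == 0) || (i == - (r%:Z + 2)) then KH
  else if (- (r%:Z + 2) < i) && (i < 0) then KF else KZ.

Ltac kap_ok kapX l :=
  let E1 := fresh in let E2 := fresh in let E3 := fresh in
  rewrite /bad; case E1: (kapX (l + 1 + 1)); case E2: (kapX (l + 1)); case E3: (kapX l) => //;
  move: E1 E2 E3; rewrite /kapA /kapH /kapB;
  repeat (case: ifP => /= ?) => //; intros; lia.

Lemma kapA_ok k l : bad (kapA k (l + 1 + 1)) (kapA k (l + 1)) (kapA k l) = false.
Proof. kap_ok (kapA k) l. Qed.

Lemma kapH_ok m l : bad (kapH m (l + 1 + 1)) (kapH m (l + 1)) (kapH m l) = false.
Proof. kap_ok (kapH m) l. Qed.

Lemma kapB_ok r l : bad (kapB r (l + 1 + 1)) (kapB r (l + 1)) (kapB r l) = false.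
Proof. kap_ok (kapB r) l. Qed.

Definition Acx (k : nat) : cplx := kcplx (@kapA_ok k).
Definition Hcx (m : int) : cplx := kcplx (@kapH_ok m).
Definition Bcx (r : nat) : cplx := kcplx (@kapB_ok r).

(* f induces isomorphisms on homology at every degree j:
   H_j = ker (d j (j-1)) / im (d (j+1) j). *)
Definition hiso (a b : int -> nat) (dX : forall i j, 'M['F_2]_(a i, a j))
  (dY : forall i j, 'M['F_2]_(b i, b j)) (f : forall i, 'M['F_2]_(a i, b i)) :=
  forall j : int,
    (forall x : 'rV['F_2]_(a j), x *m dX j (j - 1) = 0 ->
       (exists y, x *m f j = y *m dY (j + 1) j) -> exists z, x = z *m dX (j + 1) j) /\
    (forall y : 'rV['F_2]_(b j), y *m dY j (j - 1) = 0 ->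
       exists x z, x *m dX j (j - 1) = 0 /\ y = x *m f j + z *m dY (j + 1) j).

Definition is_chain (C D : cplx) (fT : forall i, 'M['F_2]_(dT (ob C i), dT (ob D i)))
  (fB : forall i, 'M['F_2]_(dB (ob C i), dB (ob D i))) :=
  (forall i, is_hom (fT i) (fB i)) /\
  (forall i j, dTh C i j *m fT j = fT i *m dTh D i j /\ dBu C i j *m fB j = fB i *m dBu D i j).

Definition qiso (C D : cplx) : Prop :=
  exists fT fB, @is_chain C D fT fB /\
    hiso (dTh C) (dTh D) fT /\ hiso (dBu C) (dBu D) fB.

Definition dIso : relation cplx := clos_refl_sym_trans cplx qiso.

(* Main.v *)
Require Import Defs.
From mathcomp Require Import all_boot all_algebra zify.
From Stdlib Require Import Relations.
Set Implicit Arguments. Unset Strict Implicit. Unset Printing Implicit Defensive.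
Import GRing.Theory Num.Theory.
Local Open Scope ring_scope.

Definition r1 (a : 'F_2) : 'rV['F_2]_1 := \row_(j < 1) a.
Definition r2 (a b : 'F_2) : 'rV['F_2]_2 := \row_(j < 2) (if (j : nat) == 0%N then a else b).

Lemma F2c (a : 'F_2) : a = 0 \/ a = 1.
Proof. case: a => -[|[|]] // h; [left|right]; exact: val_inj. Qed.

Lemma rv0 (x : 'rV['F_2]_0) : x = 0.
Proof. apply/matrixP => i [] //. Qed.
Lemma rv1 (x : 'rV['F_2]_1) : x = r1 0 \/ x = r1 1.
Proof.
case: (F2c (x 0 0)) => h; [left|right]; apply/matrixP => i j; rewrite !mxE;
by rewrite !ord1.
Qed.
Lemma rv2 (x : 'rV['F_2]_2) : x = r2 0 0 \/ x = r2 0 1 \/ x = r2 1 0 \/ x = r2 1 1.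
Proof.
have e : x = r2 (x 0 0) (x 0 1).
  apply/matrixP => i j; rewrite !mxE ord1; case: j => -[|[|]] // k.
  - by congr (x _ _); apply: val_inj.
  - by congr (x _ _); apply: val_inj.
rewrite e; case: (F2c (x 0 0)) => ->; case: (F2c (x 0 1)) => ->; tauto.
Qed.

Ltac mxdec' := apply/matrixP=> i j; rewrite ?mxE ?big_ord_recl ?big_ord0 ?mxE /=;
  repeat match goal with | i : 'I_ _ |- _ => let k := fresh in case: i => -[|[|[|]]] k //= end;
  by apply/eqP.

Ltac enum x := first [ rewrite (rv0 x) | case: (rv1 x) => -> | case: (rv2 x) => [->|[->|[->|->]]] ].

Ltac refute := let H := fresh in move=> /matrixP H; exfalso;
  first [ (move: (H ord0 ord0); rewrite !mxE ?big_ord_recl ?big_ord0 ?mxE /=; move/eqP; by [])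
        | (move: (H ord0 (@Ordinal 2 1 isT)); rewrite !mxE ?big_ord_recl ?big_ord0 ?mxE /=; move/eqP; by []) ].

Ltac hypok := first [ refute | move=> _ ].

Ltac witk k := first [ (exists 0; k) | (exists (r1 0); k) | (exists (r1 1); k)
  | (exists (r2 0 0); k) | (exists (r2 0 1); k) | (exists (r2 1 0); k) | (exists (r2 1 1); k) ].
Ltac wit1 := witk ltac:(mxdec').
Ltac wit2 := witk ltac:(witk ltac:(split; mxdec')).

Inductive ek := EZ | EH | EF | EO.
Definition Omod : Z2Mod := dualM Hmod.
Definition modE (e : ek) : Z2Mod :=
  match e with EZ => Zmod | EH => Hmod | EF => Fmod | EO => Omod end.

Definition ecanT (a c : ek) : 'M['F_2]_(dT (modE a), dT (modE c)) :=
  match a, c with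
  | EH, EF => ones 1 2
  | EF, EH => ones 2 1
  | EF, EF => 1%:M + sw
  | EO, EF => ones 1 2
  | EF, EO => ones 2 1
  | _, _ => 0
  end.
Definition ecanB (a c : ek) : 'M['F_2]_(dB (modE a), dB (modE c)) :=
  match a, c with
  | EH, EF => 1%:M
  | EF, EO => 1%:M
  | _, _ => 0
  end.
Definition idET (a c : ek) : 'M['F_2]_(dT (modE a), dT (modE c)) :=
  match a, c with
  | EZ, EZ => 1%:M | EH, EH => 1%:M | EF, EF => 1%:M | EO, EO => 1%:M
  | _, _ => 0
  end.
Definition idEB (a c : ek) : 'M['F_2]_(dB (modE a), dB (modE c)) :=
  match a, c with
  | EZ, EZ => 1%:M | EH, EH => 1%:M | EF, EF => 1%:M | EO, EO => 1%:M
  | _, _ => 0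
  end.
Definition fmT (l : bool) a c := if l then ecanT a c else idET a c.
Definition fmB (l : bool) a c := if l then ecanB a c else idEB a c.

Lemma ecan_hom a c : is_hom (ecanT a c) (ecanB a c).
Proof. by case: a; case: c; split; mxdec. Qed.

Lemma fm_hom l a c : is_hom (fmT l a c) (fmB l a c).
Proof. by case: l; [exact: ecan_hom|]; case: a; case: c; split; mxdec. Qed.

Definition ebad (a b c : ek) :=
  match a, b, c with EF, EH, EF => true | EF, EO, EF => true | EH, EF, EO => true | _, _, _ => false end.

Lemma ecan_sq a b c : ebad a b c = false ->
  ecanT a b *m ecanT b c = 0 /\ ecanB a b *m ecanB b c = 0.
Proof. by case: a; case: b; case: c => //= _; split; mxdec. Qed.

Definition edT (kap : int -> ek) (i j : int) : 'M['F_2]_(dT (modE (kap i)), dT (modE (kap j))) :=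
  if j + 1 == i then ecanT (kap i) (kap j) else 0.
Definition edB (kap : int -> ek) (i j : int) : 'M['F_2]_(dB (modE (kap i)), dB (modE (kap j))) :=
  if j + 1 == i then ecanB (kap i) (kap j) else 0.

Definition ekcplx (kap : int -> ek)
  (hk : forall k : int, ebad (kap (k + 1 + 1)) (kap (k + 1)) (kap k) = false) : cplx.
Proof.
refine (@MkCplx (fun i => modE (kap i)) (edT kap) (edB kap) _ _ _ _).
- move=> i j; rewrite /edT /edB; case: ifP => _; first exact: ecan_hom.
  by split; rewrite ?mulmx0 ?mul0mx.
- by move=> i j /negbTE h; rewrite /edT /edB h.
- move=> i j l; rewrite /edT; case: eqP => [<-|]; last by rewrite mul0mx.
  case: eqP => [<-|]; last by rewrite mulmx0.
  by have [] := ecan_sq (hk l).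
- move=> i j l; rewrite /edB; case: eqP => [<-|]; last by rewrite mul0mx.
  case: eqP => [<-|]; last by rewrite mulmx0.
  by have [] := ecan_sq (hk l).
Defined.

Lemma hiso_iso (a b : int -> nat) (dX : forall i j, 'M['F_2]_(a i, a j))
  (dY : forall i j, 'M['F_2]_(b i, b j)) (f : forall i, 'M['F_2]_(a i, b i))
  (g : forall i, 'M['F_2]_(b i, a i)) :
  (forall i j, dX i j *m f j = f i *m dY i j) ->
  (forall i, f i *m g i = 1%:M) -> (forall i, g i *m f i = 1%:M) -> hiso dX dY f.
Proof.
move=> hc hfg hgf.
have hg : forall i j, dY i j *m g j = g i *m dX i j.
  move=> i j.
  by rewrite -[RHS]mulmx1 -(hfg j) !mulmxA -[g i *m dX i j *m f j]mulmxA hc mulmxA hgf mul1mx.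
move=> j; split.
- move=> x _ [y hy]; exists (y *m g (j + 1)).
  by rewrite -mulmxA -hg mulmxA -hy -mulmxA hfg mulmx1.
- move=> y hy; exists (y *m g j), 0; split.
    by rewrite -mulmxA -hg mulmxA hy mul0mx.
  by rewrite mul0mx addr0 -mulmxA hgf mulmx1.
Qed.

Lemma iso_qiso (C D : cplx) (fT : forall i, 'M['F_2]_(dT (ob C i), dT (ob D i)))
  (fB : forall i, 'M['F_2]_(dB (ob C i), dB (ob D i)))
  (gT : forall i, 'M['F_2]_(dT (ob D i), dT (ob C i)))
  (gB : forall i, 'M['F_2]_(dB (ob D i), dB (ob C i))) :
  @is_chain C D fT fB ->
  (forall i, fT i *m gT i = 1%:M) -> (forall i, gT i *m fT i = 1%:M) ->
  (forall i, fB i *m gB i = 1%:M) -> (forall i, gB i *m fB i = 1%:M) ->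
  qiso C D.
Proof.
move=> hch h1 h2 h3 h4; exists fT, fB; split=> //; case: hch => _ hc; split.
- by apply: (hiso_iso (g := gT)) => // i j; case: (hc i j).
- by apply: (hiso_iso (g := gB)) => // i j; case: (hc i j).
Qed.

Definition hloc p q r p' q' r' (dX0 : 'M['F_2]_(q, p)) (dX1 : 'M['F_2]_(r, q))
  (dY0 : 'M['F_2]_(q', p')) (dY1 : 'M['F_2]_(r', q')) (f : 'M['F_2]_(q, q')) :=
 (forall x : 'rV_q, x *m dX0 = 0 -> (exists y, x *m f = y *m dY1) -> exists z, x = z *m dX1) /\
 (forall y : 'rV_q', y *m dY0 = 0 -> exists x z, x *m dX0 = 0 /\ y = x *m f + z *m dY1).

Lemma hiso_loc (a b : int -> nat) (dX : forall i j, 'M['F_2]_(a i, a j))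
  (dY : forall i j, 'M['F_2]_(b i, b j)) (f : forall i, 'M['F_2]_(a i, b i)) :
  (forall j, hloc (dX j (j - 1)) (dX (j + 1) j) (dY j (j - 1)) (dY (j + 1) j) (f j)) ->
  hiso dX dY f.
Proof. by []. Qed.

Definition goodloc (a b c a' b' c' : ek) (l : bool) : bool :=
  match a, b, c, a', b', c', l with
  | EF, EF, EF, EF, EF, EF, false => true
  | EF, EF, EF, EF, EF, EO, false => true
  | EF, EF, EF, EF, EO, EZ, true => true
  | EF, EF, EH, EF, EF, EH, false => true
  | EF, EF, EH, EO, EZ, EZ, false => true
  | EF, EF, EZ, EF, EF, EZ, false => true
  | EF, EH, EZ, EF, EH, EZ, false => true
  | EF, EH, EZ, EF, EZ, EZ, false => true
  | EF, EH, EZ, EZ, EZ, EZ, false => true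
  | EF, EZ, EZ, EF, EZ, EZ, false => true
  | EH, EF, EF, EF, EF, EF, false => true
  | EH, EF, EH, EF, EF, EH, false => true
  | EH, EF, EZ, EF, EF, EZ, false => true
  | EH, EZ, EZ, EF, EZ, EZ, false => true
  | EH, EZ, EZ, EH, EZ, EZ, false => true
  | EH, EZ, EZ, EZ, EZ, EZ, false => true
  | EO, EF, EF, EO, EF, EF, false => true
  | EO, EF, EF, EO, EF, EO, false => true
  | EZ, EF, EF, EZ, EF, EF, false => true
  | EZ, EF, EF, EZ, EF, EO, false => true
  | EZ, EF, EF, EZ, EO, EZ, true => true
  | EZ, EF, EH, EO, EF, EZ, true => true
  | EZ, EH, EF, EF, EF, EF, true => true
  | EZ, EH, EZ, EF, EF, EZ, true => true
  | EZ, EO, EF, EZ, EO, EF, false => true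
  | EZ, EZ, EF, EZ, EO, EF, false => true
  | EZ, EZ, EF, EZ, EZ, EF, false => true
  | EZ, EZ, EF, EZ, EZ, EO, false => true
  | EZ, EZ, EH, EO, EF, EF, false => true
  | EZ, EZ, EO, EZ, EZ, EO, false => true
  | EZ, EZ, EZ, EZ, EO, EF, false => true
  | EZ, EZ, EZ, EZ, EZ, EO, false => true
  | EZ, EZ, EZ, EZ, EZ, EZ, false => true
  | _, _, _, _, _, _, _ => false
  end.

Definition goodsq (a b a' b' : ek) (l l' : bool) : bool :=
  match a, b, a', b', l, l' with
  | EF, EF, EF, EF, false, false => true
  | EF, EF, EO, EF, true, false => true
  | EF, EF, EZ, EO, false, true => true
  | EF, EH, EF, EF, false, true => true
  | EF, EO, EF, EO, false, false => true
  | EF, EZ, EF, EO, true, false => true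
  | EF, EZ, EF, EZ, false, false => true
  | EF, EZ, EO, EZ, true, false => true
  | EH, EF, EH, EF, false, false => true
  | EH, EF, EZ, EF, false, true => true
  | EH, EF, EZ, EZ, false, false => true
  | EH, EZ, EF, EF, true, false => true
  | EO, EZ, EO, EZ, false, false => true
  | EZ, EF, EZ, EF, false, false => true
  | EZ, EH, EZ, EF, false, true => true
  | EZ, EH, EZ, EH, false, false => true
  | EZ, EH, EZ, EZ, false, false => true
  | EZ, EZ, EF, EO, false, false => true
  | EZ, EZ, EO, EZ, false, false => true
  | EZ, EZ, EZ, EZ, false, false => true
  | _, _, _, _, _, _ => false
  end.

Ltac solve_hloc := split;
  [ let x := fresh "x" in let y := fresh "y" in
    move=> x; enum x; hypok; case=> y; enum y; hypok; wit1
  | let y := fresh "y" in move=> y; enum y; hypok; wit2 ].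

Lemma loc_ok a b c a' b' c' l : goodloc a b c a' b' c' l ->
  hloc (ecanT b a) (ecanT c b) (ecanT b' a') (ecanT c' b') (fmT l b b') /\
  hloc (ecanB b a) (ecanB c b) (ecanB b' a') (ecanB c' b') (fmB l b b').
Proof.
case: a; case: b => //; case: c => //; case: a' => //; case: b' => //; case: c' => //; case: l => // _;
rewrite /fmT /fmB /=; split; solve_hloc.
Qed.

Lemma sq_ok a b a' b' l l' : goodsq a b a' b' l l' ->
  ecanT a b *m fmT l' b b' = fmT l a a' *m ecanT a' b' /\
  ecanB a b *m fmB l' b b' = fmB l a a' *m ecanB a' b'.
Proof.
case: a; case: b => //; case: a' => //; case: b' => //; case: l => //; case: l' => // _;
rewrite /fmT /fmB /=; split; mxdec'.
Qed.

Lemma ek_qiso (k1 k2 : int -> ek) hk1 hk2 (lab : int -> bool) :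
  (forall i, goodsq (k1 i) (k1 (i - 1)) (k2 i) (k2 (i - 1)) (lab i) (lab (i - 1))) ->
  (forall j, goodloc (k1 (j - 1)) (k1 j) (k1 (j + 1)) (k2 (j - 1)) (k2 j) (k2 (j + 1)) (lab j)) ->
  qiso (@ekcplx k1 hk1) (@ekcplx k2 hk2).
Proof.
move=> hs hl.
exists (fun i => fmT (lab i) (k1 i) (k2 i)), (fun i => fmB (lab i) (k1 i) (k2 i)).
split; [split|split].
- move=> i; exact: fm_hom.
- move=> i j; rewrite /= /edT /edB; case: eqP => [e|_]; last by rewrite !mul0mx !mulmx0.
  subst i; have := sq_ok (hs (j + 1)); rewrite addrK => h; exact h.
- apply: hiso_loc => j /=; rewrite /edT subrK !eqxx.
  by case: (loc_ok (hl j)).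
- apply: hiso_loc => j /=; rewrite /edB subrK !eqxx.
  by case: (loc_ok (hl j)).
Qed.

Definition dualE (a : kind) : ek := match a with KZ => EZ | KH => EO | KF => EF end.
Definition toE (a : kind) : ek := match a with KZ => EZ | KH => EH | KF => EF end.

Definition isoDT (a : kind) : 'M['F_2]_(dT (modK a), dT (modE (dualE a))) :=
  match a with KZ => 1%:M | KH => 1%:M | KF => 1%:M end.
Definition isoDB (a : kind) : 'M['F_2]_(dB (modK a), dB (modE (dualE a))) :=
  match a with KZ => 1%:M | KH => 1%:M | KF => 1%:M end.
Definition isoDT' (a : kind) : 'M['F_2]_(dT (modE (dualE a)), dT (modK a)) :=
  match a with KZ => 1%:M | KH => 1%:M | KF => 1%:M end.
Definition isoDB' (a : kind) : 'M['F_2]_(dB (modE (dualE a)), dB (modK a)) :=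
  match a with KZ => 1%:M | KH => 1%:M | KF => 1%:M end.
Definition isoTT (a : kind) : 'M['F_2]_(dT (modK a), dT (modE (toE a))) :=
  match a with KZ => 1%:M | KH => 1%:M | KF => 1%:M end.
Definition isoTB (a : kind) : 'M['F_2]_(dB (modK a), dB (modE (toE a))) :=
  match a with KZ => 1%:M | KH => 1%:M | KF => 1%:M end.
Definition isoTT' (a : kind) : 'M['F_2]_(dT (modE (toE a)), dT (modK a)) :=
  match a with KZ => 1%:M | KH => 1%:M | KF => 1%:M end.
Definition isoTB' (a : kind) : 'M['F_2]_(dB (modE (toE a)), dB (modK a)) :=
  match a with KZ => 1%:M | KH => 1%:M | KF => 1%:M end.

Lemma sw_tr : sw^T = sw. Proof. mxdec'. Qed.
Lemma trD m n (A B : 'M['F_2]_(m, n)) : (A + B)^T = A^T + B^T. Proof. exact: linearD. Qed.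
Ltac trsimp := rewrite /= ?trmx0 ?trmx1 /ones ?trmx_const ?trD ?trmx1 ?sw_tr.

Lemma isoD_hom a : @is_hom (dualM (modK a)) (modE (dualE a)) (isoDT a) (isoDB a).
Proof. by case: a; rewrite /is_hom /=; trsimp; split; mxdec'. Qed.
Lemma isoT_hom a : @is_hom (modK a) (modE (toE a)) (isoTT a) (isoTB a).
Proof. by case: a; split; mxdec'. Qed.

Lemma isoD_inv a : [/\ isoDT a *m isoDT' a = 1%:M, isoDT' a *m isoDT a = 1%:M,
  isoDB a *m isoDB' a = 1%:M & isoDB' a *m isoDB a = 1%:M].
Proof. by case: a; split; mxdec'. Qed.
Lemma isoT_inv a : [/\ isoTT a *m isoTT' a = 1%:M, isoTT' a *m isoTT a = 1%:M,
  isoTB a *m isoTB' a = 1%:M & isoTB' a *m isoTB a = 1%:M].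
Proof. by case: a; split; mxdec'. Qed.

Lemma canon_dual a c : (canonT c a)^T *m isoDT c = isoDT a *m ecanT (dualE a) (dualE c) /\
  (canonB c a)^T *m isoDB c = isoDB a *m ecanB (dualE a) (dualE c).
Proof. by case: a; case: c; trsimp; split; mxdec'. Qed.
Lemma canon_to a c : canonT a c *m isoTT c = isoTT a *m ecanT (toE a) (toE c) /\
  canonB a c *m isoTB c = isoTB a *m ecanB (toE a) (toE c).
Proof. by case: a; case: c; split; mxdec'. Qed.

Lemma op_iso kap hk hk' : qiso (opC (@kcplx kap hk)) (@ekcplx (fun i => dualE (kap (- i))) hk').
Proof.
apply: (@iso_qiso (opC (@kcplx kap hk)) (@ekcplx (fun i => dualE (kap (- i))) hk') (fun i => isoDT (kap (- i))) (fun i => isoDB (kap (- i)))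
   (fun i => isoDT' (kap (- i))) (fun i => isoDB' (kap (- i)))); last first.
- by move=> i; case: (isoD_inv (kap (- i))).
- by move=> i; case: (isoD_inv (kap (- i))).
- by move=> i; case: (isoD_inv (kap (- i))).
- by move=> i; case: (isoD_inv (kap (- i))).
split.
- move=> i; exact: isoD_hom.
- move=> i j /=; rewrite /kdT /kdB /edT /edB.
  have -> : (- i + 1 == - j) = (j + 1 == i) by apply/idP/idP => /eqP h; apply/eqP; lia.
  case: ifP => _; last by rewrite !trmx0 !mul0mx !mulmx0.
  exact: canon_dual.
Qed.

Lemma shift_iso s kap hk hk' : qiso (shiftC s (@kcplx kap hk)) (@ekcplx (fun i => toE (kap (i - s))) hk').
Proof.
apply: (@iso_qiso (shiftC s (@kcplx kap hk)) (@ekcplx (fun i => toE (kap (i - s))) hk') (fun i => isoTT (kap (i - s))) (fun i => isoTB (kap (i - s)))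
   (fun i => isoTT' (kap (i - s))) (fun i => isoTB' (kap (i - s)))); last first.
- by move=> i; case: (isoT_inv (kap (i - s))).
- by move=> i; case: (isoT_inv (kap (i - s))).
- by move=> i; case: (isoT_inv (kap (i - s))).
- by move=> i; case: (isoT_inv (kap (i - s))).
split.
- move=> i; exact: isoT_hom.
- move=> i j /=; rewrite /kdT /kdB /edT /edB.
  have -> : (j - s + 1 == i - s) = (j + 1 == i) by apply/idP/idP => /eqP h; apply/eqP; lia.
  case: ifP => _; last by rewrite !mul0mx !mulmx0.
  exact: canon_to.
Qed.

Lemma k_iso kap hk hk' : qiso (@kcplx kap hk) (@ekcplx (fun i => toE (kap i)) hk').
Proof.
apply: (@iso_qiso (@kcplx kap hk) (@ekcplx (fun i => toE (kap i)) hk') (fun i => isoTT (kap i)) (fun i => isoTB (kap i))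
   (fun i => isoTT' (kap i)) (fun i => isoTB' (kap i))); last first.
- by move=> i; case: (isoT_inv (kap i)).
- by move=> i; case: (isoT_inv (kap i)).
- by move=> i; case: (isoT_inv (kap i)).
- by move=> i; case: (isoT_inv (kap i)).
split.
- move=> i; exact: isoT_hom.
- move=> i j /=; rewrite /kdT /kdB /edT /edB.
  case: ifP => _; last by rewrite !mul0mx !mulmx0.
  exact: canon_to.
Qed.

Lemma idE_inv a a' : a = a' -> idET a a' *m idET a' a = 1%:M /\ idEB a a' *m idEB a' a = 1%:M.
Proof. by move=> <-; case: a; split; mxdec'. Qed.

Lemma idE_comm a c a' c' : a = a' -> c = c' ->
  ecanT a c *m idET c c' = idET a a' *m ecanT a' c' /\ ecanB a c *m idEB c c' = idEB a a' *m ecanB a' c'.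
Proof. by move=> <- <-; case: a; case: c; split; mxdec'. Qed.

Lemma ext_iso (k1 k2 : int -> ek) hk1 hk2 : k1 =1 k2 -> qiso (@ekcplx k1 hk1) (@ekcplx k2 hk2).
Proof.
move=> e.
apply: (@iso_qiso (@ekcplx k1 hk1) (@ekcplx k2 hk2) (fun i => idET (k1 i) (k2 i)) (fun i => idEB (k1 i) (k2 i))
   (fun i => idET (k2 i) (k1 i)) (fun i => idEB (k2 i) (k1 i))); last first.
- by move=> i; case: (idE_inv (esym (e i))).
- by move=> i; case: (idE_inv (e i)).
- by move=> i; case: (idE_inv (esym (e i))).
- by move=> i; case: (idE_inv (e i)).
split.
- move=> i; exact: (fm_hom false).
- move=> i j /=; rewrite /edT /edB.
  case: ifP => _; last by rewrite !mul0mx !mulmx0.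
  exact: idE_comm.
Qed.

Ltac splitif := repeat (case: ifP => /= ?; try (by exfalso; lia)); try done.

Definition kh1 (n : int) (i : int) : ek := dualE (kapH n (- i)).
Definition kh2 (n : int) (i : int) : ek := toE (kapH (- (n + 2)) i).
Definition labH (n : int) (i : int) : bool :=
  ((0 <= n) && (i == n)) || ((n == -1) && (i == 0)) || ((n < -1) && (i == n + 2)).

Lemma kh1_ok n l : ebad (kh1 n (l + 1 + 1)) (kh1 n (l + 1)) (kh1 n l) = false.
Proof. rewrite /kh1 /kapH; splitif. Qed.
Lemma kh2_ok n l : ebad (kh2 n (l + 1 + 1)) (kh2 n (l + 1)) (kh2 n l) = false.
Proof. rewrite /kh2 /kapH; splitif. Qed.

Lemma kh_sq n i : goodsq (kh2 n i) (kh2 n (i - 1)) (kh1 n i) (kh1 n (i - 1)) (labH n i) (labH n (i - 1)).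
Proof. rewrite /kh1 /kh2 /kapH /labH; splitif. Qed.

Lemma kh_loc n j : goodloc (kh2 n (j - 1)) (kh2 n j) (kh2 n (j + 1)) (kh1 n (j - 1)) (kh1 n j) (kh1 n (j + 1)) (labH n j).
Proof. rewrite /kh1 /kh2 /kapH /labH; splitif. Qed.

Definition kb1 (r : nat) (i : int) : ek := dualE (kapB r (- i)).
Definition kb2 (r : nat) (i : int) : ek := toE (kapB r (i - (r%:Z + 4))).
Definition kw (r : nat) (i : int) : ek :=
  if i == r%:Z + 4 then EH else if (1 <= i) && (i <= r%:Z + 3) then EF else if i == 0 then EO else EZ.
Definition labB1 (r : nat) (i : int) : bool := i == 2.
Definition labB2 (r : nat) (i : int) : bool := i == r%:Z + 2.

Lemma kb1_ok r l : ebad (kb1 r (l + 1 + 1)) (kb1 r (l + 1)) (kb1 r l) = false.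
Proof. rewrite /kb1 /kapB; splitif. Qed.
Lemma kb2_ok r l : ebad (kb2 r (l + 1 + 1)) (kb2 r (l + 1)) (kb2 r l) = false.
Proof. rewrite /kb2 /kapB; splitif. Qed.
Lemma kw_ok r l : ebad (kw r (l + 1 + 1)) (kw r (l + 1)) (kw r l) = false.
Proof. rewrite /kw; splitif. Qed.

Lemma kb_sq1 r i : goodsq (kb2 r i) (kb2 r (i - 1)) (kw r i) (kw r (i - 1)) (labB1 r i) (labB1 r (i - 1)).
Proof. rewrite /kb2 /kw /kapB /labB1; splitif. Qed.
Lemma kb_loc1 r j : goodloc (kb2 r (j - 1)) (kb2 r j) (kb2 r (j + 1)) (kw r (j - 1)) (kw r j) (kw r (j + 1)) (labB1 r j).
Proof. rewrite /kb2 /kw /kapB /labB1; splitif. Qed.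
Lemma kb_sq2 r i : goodsq (kw r i) (kw r (i - 1)) (kb1 r i) (kb1 r (i - 1)) (labB2 r i) (labB2 r (i - 1)).
Proof. rewrite /kb1 /kw /kapB /labB2; splitif. Qed.
Lemma kb_loc2 r j : goodloc (kw r (j - 1)) (kw r j) (kw r (j + 1)) (kb1 r (j - 1)) (kb1 r j) (kb1 r (j + 1)) (labB2 r j).
Proof. rewrite /kb1 /kw /kapB /labB2; splitif. Qed.

Definition ka1 (k : nat) (i : int) : ek := dualE (kapA k (- i)).
Definition ka2 (k : nat) (i : int) : ek := toE (kapA k (i - - (k%:Z))).
Lemma ka1_ok k l : ebad (ka1 k (l + 1 + 1)) (ka1 k (l + 1)) (ka1 k l) = false.
Proof. rewrite /ka1 /kapA; splitif. Qed.
Lemma ka2_ok k l : ebad (ka2 k (l + 1 + 1)) (ka2 k (l + 1)) (ka2 k l) = false.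
Proof. rewrite /ka2 /kapA; splitif. Qed.
Lemma ka_eq k : ka1 k =1 ka2 k.
Proof. move=> i; rewrite /ka1 /ka2 /kapA; splitif. Qed.

Theorem proposition4p13 :
  (forall k : nat, dIso (opC (Acx k)) (shiftC (- (k%:Z)) (Acx k))) /\
  (forall n : int, dIso (opC (Hcx n)) (Hcx (- (n + 2)))) /\
  (forall r : nat, dIso (opC (Bcx r)) (shiftC (r%:Z + 4) (Bcx r))).
Proof.
split; [|split].
- move=> k.
  apply: (rst_trans _ _ _ (@ekcplx (ka1 k) (ka1_ok k))).
    apply: rst_step; exact: (@op_iso (kapA k) (@kapA_ok k) (ka1_ok k)).
  apply: (rst_trans _ _ _ (@ekcplx (ka2 k) (ka2_ok k))).
    apply: rst_step; exact: (ext_iso (ka1_ok k) (ka2_ok k) (ka_eq k)).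
  apply: rst_sym; apply: rst_step; exact: (@shift_iso (- (k%:Z)) (kapA k) (@kapA_ok k) (ka2_ok k)).
- move=> n.
  apply: (rst_trans _ _ _ (@ekcplx (kh1 n) (kh1_ok n))).
    apply: rst_step; exact: (@op_iso (kapH n) (@kapH_ok n) (kh1_ok n)).
  apply: (rst_trans _ _ _ (@ekcplx (kh2 n) (kh2_ok n))).
    apply: rst_sym; apply: rst_step; exact: (ek_qiso (kh2_ok n) (kh1_ok n) (kh_sq n) (kh_loc n)).
  apply: rst_sym; apply: rst_step; exact: (@k_iso (kapH (- (n + 2))) (@kapH_ok (- (n + 2))) (kh2_ok n)).
- move=> r.
  apply: (rst_trans _ _ _ (@ekcplx (kb1 r) (kb1_ok r))).
    apply: rst_step; exact: (@op_iso (kapB r) (@kapB_ok r) (kb1_ok r)).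
  apply: (rst_trans _ _ _ (@ekcplx (kw r) (kw_ok r))).
    apply: rst_sym; apply: rst_step; exact: (ek_qiso (kw_ok r) (kb1_ok r) (kb_sq2 r) (kb_loc2 r)).
  apply: (rst_trans _ _ _ (@ekcplx (kb2 r) (kb2_ok r))).
    apply: rst_sym; apply: rst_step; exact: (ek_qiso (kb2_ok r) (kw_ok r) (kb_sq1 r) (kb_loc1 r)).
  apply: rst_sym; apply: rst_step; exact: (@shift_iso (r%:Z + 4) (kapB r) (@kapB_ok r) (kb2_ok r)).
Qed.
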